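(* Let $G$ be a unit square graph with realization $f$, let $\mathcal{P}$ be a clique-partition of $V(G)$, and let $\simeq$ be the equivalence relation on $V(G)\cup\mathcal{M}(G)$ whose classes form the coarsest partition of $V(G)\cup\mathcal{M}(G)$ that is stable with respect to $G^*_{\mathcal{M}}$ and refines $\mathcal{P}\cup\{\mathcal{M}(G)\}$. If $C,D$ are distinct maximal cliques with $C\simeq D$, then $z_f(C)_i\cap z_f(D)_i=\emptyset$ for $i=1,2$.
   Context: A realization of $G$ is $f\colon V(G)\to\mathbb{R}^2$ with $vw\in E(G)$ iff $\|f(v)-f(w)\|_\infty\le1$ for distinct $v,w$; a unit square graph is a graph with a realization. A clique-partition is a partition of $V(G)$ all of whose parts are cliques. $\mathcal{M}(G)$ is the set of maximal cliques. $G^*_{\mathcal{M}}$ is the graph on $V(G)\sqcup\mathcal{M}(G)$ with edge set $E(G)\cup\{vC \mid C\in\mathcal{M}(G), v\in C\}$. A partition $\mathcal{Q}$ of the vertex set of a graph $H$ is stable if for all $X,Y\in\mathcal{Q}$ and $v,w\in X$, $|N_H(v)\cap Y|=|N_H(w)\cap Y|$. The center of a maximal clique $C$ is $z_f(C)=\{p\in\mathbb{R}^2\mid\forall v\in C:\|f(v)-p\|_\infty\le\tfrac12\}$, and $z_f(C)_i=\{p_i\mid p\in z_f(C)\}$ is its projection to the $i$-th coordinate. *)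

(* Defs.v *)
From HB Require Import structures.
From mathcomp Require Import all_boot all_order all_algebra.
Set Implicit Arguments. Unset Strict Implicit. Unset Printing Implicit Defensive.
Import Order.TTheory GRing.Theory Num.Theory.

Section Defs.
Variable V : finType.
Variable e : rel V.

Definition simple_graph := symmetric e /\ irreflexive e.

Definition is_clique (C : {set V}) : bool :=
  [forall v in C, forall w in C, (v != w) ==> e v w].

Definition is_maxclique (C : {set V}) : bool := maxset is_clique C.

Definition maxcliques : {set {set V}} := [set C | is_maxclique C].

Definition clique_partition (P : {set {set V}}) : Prop :=
  partition P [set: V] /\ {in P, forall C, is_clique C}.

(* vertex type of G*_M : V(G) ⊔ M(G), realised inside V + {set V} *)
Definition Tstar := (V + {set V})%type.

Definition Vstar : {set Tstar} :=
  [set inl v | v : V] :|: [set inr C | C in maxcliques].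

Definition estar (x y : Tstar) : bool :=
  match x, y with
  | inl v, inl w => e v w
  | inl v, inr C => (C \in maxcliques) && (v \in C)
  | inr C, inl v => (C \in maxcliques) && (v \in C)
  | inr _, inr _ => false
  end.

Definition stable (Q : {set {set Tstar}}) : Prop :=
  forall X Y, X \in Q -> Y \in Q -> forall v w, v \in X -> w \in X ->
    #|[set u in Y | estar v u]| = #|[set u in Y | estar w u]|.

Definition refines (Q Q' : {set {set Tstar}}) : Prop :=
  forall X, X \in Q -> exists2 Y, Y \in Q' & X \subset Y.

Definition base_partition (P : {set {set V}}) : {set {set Tstar}} :=
  [set [set inl v | v in B] | B : {set V} in P] :|: [set [set inr C | C in maxcliques]].

Definition coarsest_stable_refinement (P : {set {set V}}) (Q : {set {set Tstar}}) : Prop :=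
  [/\ partition Q Vstar, stable Q, refines Q (base_partition P) &
      forall Q', partition Q' Vstar -> stable Q' -> refines Q' (base_partition P) ->
        refines Q' Q].

Definition equiv_in (Q : {set {set Tstar}}) (x y : Tstar) : Prop :=
  exists2 X, X \in Q & (x \in X) && (y \in X).
End Defs.

Section Geom.
Variable R : realFieldType.
Local Open Scope ring_scope.

Definition dinf (p q : R * R) : R := Num.max `|p.1 - q.1| `|p.2 - q.2|.

Definition coord (p : R * R) (i : 'I_2) : R := if i == ord0 then p.1 else p.2.

Definition realization (V : finType) (e : rel V) (f : V -> R * R) : Prop :=
  forall v w, v != w -> (e v w <-> dinf (f v) (f w) <= 1).

Definition center (V : finType) (f : V -> R * R) (C : {set V}) (p : R * R) : Prop :=
  forall v, v \in C -> dinf (f v) p <= 2^-1.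

Definition center_proj (V : finType) (f : V -> R * R) (C : {set V}) (i : 'I_2) (x : R) : Prop :=
  exists2 p, center f C p & coord p i = x.
End Geom.

(* Main.v *)
Require Import Defs.
From HB Require Import structures.
From mathcomp Require Import all_boot all_order all_algebra.
From mathcomp Require Import lra.
Import Order.TTheory GRing.Theory Num.Theory.

Local Open Scope ring_scope.

Lemma dinfP (R : realFieldType) (a b : R * R) (r : R) :
  dinf a b <= r <-> (forall k : 'I_2, `|Defs.coord a k - Defs.coord b k| <= r).
Proof.
rewrite /dinf ge_max; split.
  by case/andP=> h1 h2 k; rewrite /Defs.coord; case: (k == ord0).
move=> H; apply/andP; split.
  by have := H ord0; rewrite /Defs.coord eqxx.
by have := H ord_max; rewrite /Defs.coord.
Qed.

Lemma ord2_other {i k k' : 'I_2} : k != i -> k' != i -> k = k'.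
Proof.
case: i => [[|[|i]] Hi] //; case: k => [[|[|k]] Hk] //;
case: k' => [[|[|k']] Hk'] //= _ _; by apply: val_inj.
Qed.

Definition pt {R : realFieldType} (i : 'I_2) (x y : R) : R * R :=
  if i == ord0 then (x, y) else (y, x).

Lemma coord_pt_i (R : realFieldType) (i : 'I_2) (x y : R) : Defs.coord (pt i x y) i = x.
Proof. by rewrite /pt /Defs.coord; case: (i == ord0). Qed.

Lemma coord_pt_k (R : realFieldType) (i k : 'I_2) (x y : R) : k != i -> Defs.coord (pt i x y) k = y.
Proof.
rewrite /pt /Defs.coord => nki.
case: (eqVneq i ord0) => [ei | ni0].
  by rewrite ei in nki; rewrite (negbTE nki).
have -> : k == ord0.
  apply/eqP; apply: (ord2_other nki); by rewrite eq_sym.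
by [].
Qed.

Lemma clique_e {V : finType} {e : rel V} {C : {set V}} {v w : V} :
  is_clique e C -> v \in C -> w \in C -> v != w -> e v w.
Proof.
move=> /forallP H vC wC nvw.
by have /implyP /(_ vC) /forallP /(_ w) /implyP /(_ wC) /implyP := H v; apply.
Qed.

Section Main.
Set Implicit Arguments. Unset Strict Implicit.
Variables (R : realFieldType) (V : finType) (e : rel V) (f : V -> R * R).
Hypothesis sg : simple_graph e.
Hypothesis real : realization e f.

Lemma absorb (C D : {set V}) (i : 'I_2) (x : R) (p q : R * R) (l : V) :
  C \in maxcliques e ->
  center f C p -> Defs.coord p i = x -> center f D q -> Defs.coord q i = x ->
  l \in C ->
  (forall k, k != i -> forall v, v \in C :|: D -> Defs.coord (f l) k <= Defs.coord (f v) k) ->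
  forall d, d \in D -> (d = l \/ e d l) -> d \in C.
Proof.
move=> Cm hp hpi hq hqi lC low d dD dl.
have [j ji] : exists j : 'I_2, j != i.
  case: (eqVneq i ord0) => [->|ni]; first by exists ord_max.
  by exists ord0; rewrite eq_sym.
pose m := Defs.coord (f l) j.
set ps := pt i x (m + 2^-1).
rewrite inE in Cm; have /maxsetP [Ccl Cmax] := Cm.
have near : forall v, v \in C :|: D -> (v = l \/ e v l) -> m <= Defs.coord (f v) j <= m + 1.
  move=> v vCD vl; apply/andP; split; first exact: low.
  case: vl => [->|evl]; first by rewrite /m; lra.
  have nvl : v != l by apply/eqP => vl; move: evl; rewrite vl; case: sg => _ ->.
  have /dinfP /(_ j) := (proj1 (real nvl) evl).
  by rewrite ler_norml /m => /andP [_ h]; lra.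
have cps : forall v, v \in C :|: D -> (v = l \/ e v l) ->
   (forall k, k == i -> `|Defs.coord (f v) k - x| <= 2^-1) ->
   dinf (f v) ps <= 2^-1.
  move=> v vCD vl hi; apply/dinfP => k.
  case: (eqVneq k i) => [ki|ki].
    by rewrite ki coord_pt_i; apply: hi.
  rewrite coord_pt_k // (ord2_other ki ji).
  have := near v vCD vl; rewrite ler_norml => /andP [h1 h2].
  apply/andP; split; lra.
have dps : dinf (f d) ps <= 2^-1.
  apply: cps => //; first by rewrite inE dD orbT.
  move=> k /eqP ->; have /dinfP /(_ i) := hq d dD; by rewrite hqi.
have Cps : forall c, c \in C -> dinf (f c) ps <= 2^-1.
  move=> c cC; apply: cps; first by rewrite inE cC.
    case: (eqVneq c l) => [->|ncl]; first by left.
    by right; apply: (clique_e Ccl).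
  move=> k /eqP ->; have /dinfP /(_ i) := hp c cC; by rewrite hpi.
have edc : forall c, c \in C -> d != c -> e d c.
  move=> c cC ndc; apply/(real ndc)/dinfP => k.
  have /dinfP /(_ k) h1 := dps; have /dinfP /(_ k) h2 := Cps c cC.
  apply: le_trans (ler_distD (Defs.coord ps k) _ _) _.
  rewrite (distrC (Defs.coord ps k)); lra.
have cl : is_clique e (d |: C).
  apply/forallP => v; apply/implyP => vC; apply/forallP => w; apply/implyP => wC.
  apply/implyP => nvw.
  move: vC wC; rewrite !inE => /orP [/eqP vd|vC] /orP [/eqP wd|wC].
  - by move: nvw; rewrite vd wd eqxx.
  - by rewrite vd; apply: edc => //; rewrite -vd.
  - case: sg => sym _; rewrite wd sym; apply: edc => //; by rewrite -wd eq_sym.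
  - exact: clique_e Ccl vC wC nvw.
have := Cmax _ cl (subsetUr _ _) => <-.
by rewrite !inE eqxx.
Qed.

Lemma exmin (S : {set V}) (g : V -> R) (x0 : V) :
  x0 \in S -> exists2 l, l \in S & forall v, v \in S -> g l <= g v.
Proof.
move=> x0S; case: (arg_minP g x0S) => l lS H.
by exists l => // v vS; apply: H.
Qed.

Lemma final (P : {set {set V}}) (Q : {set {set Tstar V}}) C D i x p q l :
  clique_partition e P -> coarsest_stable_refinement e P Q ->
  C \in maxcliques e -> D \in maxcliques e -> C != D ->
  equiv_in Q (inr C) (inr D) ->
  center f C p -> Defs.coord p i = x -> center f D q -> Defs.coord q i = x ->
  l \in C ->
  (forall k, k != i -> forall v, v \in C :|: D -> Defs.coord (f l) k <= Defs.coord (f v) k) ->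
  False.
Proof.
move=> [_ Pcl] [Qpart Qstab Qref _] Cm Dm nCD [X XQ /andP [CX DX]] hp hpi hq hqi lC low.
have Dm' := Dm; rewrite inE in Dm'; have /maxsetP [Dcl Dmax] := Dm'.
case: (boolP (l \in D)) => lD.
  have DC : D \subset C.
    apply/subsetP => d dD; apply: (absorb Cm hp hpi hq hqi lC low dD).
    case: (eqVneq d l) => [->|ndl]; first by left.
    by right; apply: (clique_e Dcl).
  have Cm' := Cm; rewrite inE in Cm'; have /maxsetP [Ccl _] := Cm'.
  by move: nCD; rewrite (Dmax _ Ccl DC) eqxx.
have lV : inl l \in Vstar e by rewrite /Vstar inE; apply/orP; left; apply: imset_f.
move: Qpart => /and3P [/eqP cov _ _].
have : inl l \in cover Q by rewrite cov.
case/bigcupP => Y YQ lY.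
case: (Qref Y YQ) => Z ZB YZ.
move: ZB; rewrite /base_partition inE => /orP [/imsetP [B BP ZB] | ]; last first.
  rewrite inE => /eqP ZM; have := subsetP YZ _ lY; rewrite ZM.
  by case/imsetP.
rewrite ZB in YZ.
have lB : l \in B.
  by have := subsetP YZ _ lY; case/imsetP => l' l'B [->].
have Bcl := Pcl B BP.
have := Qstab X Y XQ YQ (inr C) (inr D) CX DX.
have pr : [set u in Y | estar e (inr D) u] \proper [set u in Y | estar e (inr C) u].
  apply/properP; split.
    apply/subsetP => u; rewrite !inE => /andP [uY Du]; rewrite uY /=.
    have := subsetP YZ u uY => /imsetP [d dB ud]; subst u.
    move: Du => /= /andP [_ dD]; rewrite Cm /=.
    apply: (absorb Cm hp hpi hq hqi lC low dD).
    right; apply: (clique_e Bcl dB lB).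
    by apply/eqP => dl; move: lD; rewrite -dl dD.
  exists (inl l); rewrite !inE lY /=; first by rewrite Cm lC.
  by rewrite (negbTE lD) andbF.
by move: (proper_card pr) => /[swap] ->; rewrite ltnn.
Qed.
End Main.

Theorem mainTheorem12 (R : realFieldType) (V : finType) (e : rel V)
  (f : V -> R * R) (P : {set {set V}}) (Q : {set {set Tstar V}}) :
  simple_graph e ->
  realization e f ->
  clique_partition e P ->
  coarsest_stable_refinement e P Q ->
  forall C D : {set V}, C \in maxcliques e -> D \in maxcliques e -> C != D ->
  equiv_in Q (inr C) (inr D) ->
  forall i : 'I_2, ~ (exists x, center_proj f C i x /\ center_proj f D i x).
Proof.
move=> sg real cP cQ C D Cm Dm nCD eqv i [x [[p hp hpi] [q hq hqi]]].
have [j ji] : exists j : 'I_2, j != i.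
  case: (eqVneq i ord0) => [->|ni]; first by exists ord_max.
  by exists ord0; rewrite eq_sym.
case: (set_0Vmem (C :|: D)) => [E | [x0 x0in]].
  move: E => /eqP; rewrite setU_eq0 => /andP [/eqP C0 /eqP D0].
  by move: nCD; rewrite C0 D0 eqxx.
have [l lS lmin] := exmin (fun v => Defs.coord (f v) j) x0in.
have low : forall S, S = C :|: D -> forall k, k != i -> forall v, v \in S ->
    Defs.coord (f l) k <= Defs.coord (f v) k.
  move=> S -> k ki v vS; rewrite (ord2_other ki ji); exact: lmin.
move: lS; rewrite inE => /orP [lC|lD].
  exact: (final sg real cP cQ Cm Dm nCD eqv hp hpi hq hqi lC (low _ erefl)).
apply: (final sg real cP cQ Dm Cm _ _ hq hqi hp hpi lD (low _ (setUC _ _))).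
  by rewrite eq_sym.
by case: eqv => X XQ /andP [h1 h2]; exists X => //; rewrite h1 h2.
Qed.
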